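(* Let $n=4$, $m=3$, $b=(1,0,0)^T$, $C=\mathrm{diag}(1,0,0,0)$, and let $A^1,A^2,A^3\in\mathbb{S}^4$ be such that for all $y\in\mathbb{R}^3$ $$C-\sum_{i=1}^3A^iy_i=\begin{pmatrix}1-y_1&0&-y_3&-y_3\\0&-y_2&-y_1&0\\-y_3&-y_1&-y_3&0\\-y_3&0&0&0\end{pmatrix},$$ i.e. $A^1$ has entries $(1,1)=1$, $(2,3)=(3,2)=1$ and zeros elsewhere; $A^2$ has entry $(2,2)=1$ and zeros elsewhere; $A^3$ has entries $(1,3)=(3,1)=(1,4)=(4,1)=(3,3)=1$ and zeros elsewhere. For the associated pair $\mathbf{P},\mathbf{D}$ (with $v(\mathbf{P})=1$, $v(\mathbf{D})=0$), the limiting pd-regularized optimal value function satisfies: 1. $v_a(\theta)=v(\mathbf{P})=1$ for all $\theta\in[0,\pi/2)$; 2. $v_a(\pi/2)=v(\mathbf{D})=0$.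
   Context: $\mathbf{P}$: $\min_X C\bullet X$ s.t. $A^i\bullet X=b_i$ ($i=1,\dots,m$), $X\succeq 0$; $\mathbf{D}$: $\max_y b^Ty$ s.t. $C-\sum_iA^iy_i\succeq 0$; $v(\cdot)$ denotes optimal value. For $\varepsilon,\eta\ge0$: $\mathbf{P}(\varepsilon,\eta)$: $\min_X (C+\varepsilon I)\bullet X$ s.t. $A^i\bullet X=b_i+\eta A^i\bullet I$, $X\succeq0$; $\mathbf{D}(\varepsilon,\eta)$: $\max_y \sum_i(b_i+\eta A^i\bullet I)y_i$ s.t. $C-\sum_iA^iy_i+\varepsilon I\succeq 0$. For $(\varepsilon,\eta)\ne(0,0)$, $v(\varepsilon,\eta)$ is the common optimal value of these two problems, and $v_a(\theta)=\lim_{t\downarrow0}v(t\cos\theta,t\sin\theta)$ for $\theta\in[0,\pi/2]$. *)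

(* Defs.v *)
From HB Require Import structures.
From mathcomp Require Import all_boot all_order all_algebra.
From mathcomp Require Import all_classical all_reals all_analysis.
Set Implicit Arguments. Unset Strict Implicit. Unset Printing Implicit Defensive.
Import Order.TTheory GRing.Theory Num.Theory.
Local Open Scope ring_scope.
Local Open Scope classical_set_scope.

Section SDP.
Variables (R : realType) (n m : nat).

Definition frob (A X : 'M[R]_n) : R := \sum_(i < n) \sum_(j < n) A i j * X i j.

Definition psd (X : 'M[R]_n) : Prop :=
  X^T = X /\ forall x : 'cV[R]_n, 0 <= (x^T *m X *m x) 0 0.

Definition P_feas (A : 'I_m -> 'M[R]_n) (b : 'I_m -> R) (X : 'M[R]_n) : Prop :=
  psd X /\ forall i, frob (A i) X = b i.
Definition vP (A : 'I_m -> 'M[R]_n) (b : 'I_m -> R) (C : 'M[R]_n) : \bar R :=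
  ereal_inf [set (frob C X)%:E | X in P_feas A b].

Definition D_feas (A : 'I_m -> 'M[R]_n) (C : 'M[R]_n) (y : 'I_m -> R) : Prop :=
  psd (C - \sum_(i < m) y i *: A i).
Definition vD (A : 'I_m -> 'M[R]_n) (b : 'I_m -> R) (C : 'M[R]_n) : \bar R :=
  ereal_sup [set (\sum_(i < m) b i * y i)%:E | y in D_feas A C].

Definition vreg (A : 'I_m -> 'M[R]_n) (b : 'I_m -> R) (C : 'M[R]_n)
  (eps eta : R) : \bar R :=
  vP A (fun i => b i + eta * frob (A i) 1%:M) (C + eps%:M).

End SDP.

(* The concrete example, n = 4, m = 3 (indices 0-based). *)
Definition exC (R : realType) : 'M[R]_4 :=
  \matrix_(i < 4, j < 4) (if (val i == 0%N) && (val j == 0%N) then 1 else 0).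

Definition exA1 (R : realType) : 'M[R]_4 :=
  \matrix_(i < 4, j < 4)
    (match (val i : nat), (val j : nat) with
     | 0, 0 => 1 | 1, 2 => 1 | 2, 1 => 1 | _, _ => 0 end : R).

Definition exA2 (R : realType) : 'M[R]_4 :=
  \matrix_(i < 4, j < 4)
    (match (val i : nat), (val j : nat) with 1, 1 => 1 | _, _ => 0 end : R).

Definition exA3 (R : realType) : 'M[R]_4 :=
  \matrix_(i < 4, j < 4)
    (match (val i : nat), (val j : nat) with
     | 0, 2 => 1 | 2, 0 => 1 | 0, 3 => 1 | 3, 0 => 1 | 2, 2 => 1
     | _, _ => 0 end : R).

Definition exA (R : realType) (i : 'I_3) : 'M[R]_4 :=
  match (val i : nat) with 0%N => exA1 R | 1%N => exA2 R | _ => exA3 R end.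

Definition exb (R : realType) (i : 'I_3) : R := if val i == 0%N then 1 else 0.

(* Main.v *)
Require Import Defs.
From HB Require Import structures.
From mathcomp Require Import all_boot all_order all_algebra.
From mathcomp Require Import all_classical all_reals all_analysis.
From mathcomp Require Import lra ring.
Import Order.TTheory GRing.Theory Num.Theory.
Local Open Scope ring_scope.
Local Open Scope classical_set_scope.


Definition i0 : 'I_4 := @Ordinal 4 0 isT.
Definition i1 : 'I_4 := @Ordinal 4 1 isT.
Definition i2 : 'I_4 := @Ordinal 4 2 isT.
Definition i3 : 'I_4 := @Ordinal 4 3 isT.

Section S1.
Variable R : realType.

Lemma sum4 (F : 'I_4 -> R) : \sum_(i < 4) F i = F i0 + F i1 + F i2 + F i3.
Proof.
rewrite !big_ord_recr big_ord0 /= add0r.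
have -> : (widen_ord (leqnSn 3) (widen_ord (leqnSn 2) (widen_ord (leqnSn 1) ord_max))) = i0 by apply: val_inj.
have -> : (widen_ord (leqnSn 3) (widen_ord (leqnSn 2) ord_max)) = i1 by apply: val_inj.
have -> : (widen_ord (leqnSn 3) ord_max) = i2 by apply: val_inj.
have -> : (@ord_max 3) = i3 by apply: val_inj.
by [].
Qed.

Definition vec4 (a b c d : R) : 'cV[R]_4 :=
  \col_(k < 4) (match val k with 0 => a | 1 => b | 2 => c | _ => d end).

Definition q4 (X : 'M[R]_4) (a b c d : R) : R :=
  \sum_(i < 4) \sum_(j < 4) (vec4 a b c d) i 0 * X i j * (vec4 a b c d) j 0.

Lemma quadE (X : 'M[R]_4) (x : 'cV[R]_4) :
  (x^T *m X *m x) 0 0 = \sum_(i < 4) \sum_(j < 4) x i 0 * X i j * x j 0.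
Proof.
rewrite mxE; under eq_bigr => j _ do rewrite mxE big_distrl /=.
rewrite exchange_big /=; apply: eq_bigr => i _; apply: eq_bigr => j _.
by rewrite mxE.
Qed.

Lemma psd_q (X : 'M[R]_4) a b c d : psd X -> 0 <= q4 X a b c d.
Proof. by case=> _ /(_ (vec4 a b c d)); rewrite quadE. Qed.

Lemma psd_sym (X : 'M[R]_4) i j : psd X -> X i j = X j i.
Proof. by case=> /matrixP /(_ j i); rewrite mxE. Qed.

End S1.

Definition j0 : 'I_3 := @Ordinal 3 0 isT.
Definition j1 : 'I_3 := @Ordinal 3 1 isT.
Definition j2 : 'I_3 := @Ordinal 3 2 isT.

Section S2.
Variable R : realType.
Implicit Types X : 'M[R]_4.

Lemma frob4 X (A : 'M[R]_4) : frob A X = \sum_(i < 4) \sum_(j < 4) A i j * X i j.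
Proof. by []. Qed.

Lemma frobA0 X : psd X -> frob (exA R j0) X = X i0 i0 + 2 * X i1 i2.
Proof.
move=> hX; rewrite frob4 !sum4 /exA /= /exA1 !mxE /=.
rewrite (@psd_sym _ X i2 i1 hX); lra.
Qed.

Lemma frobA1 X : frob (exA R j1) X = X i1 i1.
Proof. rewrite frob4 !sum4 /exA /= /exA2 !mxE /=; lra. Qed.

Lemma frobA2 X : psd X -> frob (exA R j2) X = 2 * X i0 i2 + 2 * X i0 i3 + X i2 i2.
Proof.
move=> hX; rewrite frob4 !sum4 /exA /= /exA3 !mxE /=.
rewrite (@psd_sym _ X i2 i0 hX) (@psd_sym _ X i3 i0 hX); lra.
Qed.

Lemma frobAI i : frob (exA R i) 1%:M = 1.
Proof.
case: i => [[|[|[|k]]] Hk]; rewrite frob4 !sum4 /exA /= ?/exA1 ?/exA2 ?/exA3 !mxE /=; lra.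
Qed.

Lemma frobC eps X : frob (exC R + eps%:M) X = X i0 i0 + eps * (X i0 i0 + X i1 i1 + X i2 i2 + X i3 i3).
Proof. rewrite frob4 !sum4 /exC !mxE /=; lra. Qed.

End S2.

Section S3.
Variable R : realType.
Implicit Types X : 'M[R]_4.

Ltac pairtac a b c d X hX :=
  have := @psd_q _ X a b c d hX; rewrite /q4 !sum4 !mxE /=;
  rewrite ?(@psd_sym _ X i1 i0 hX) ?(@psd_sym _ X i2 i0 hX) ?(@psd_sym _ X i3 i0 hX)
          ?(@psd_sym _ X i2 i1 hX) ?(@psd_sym _ X i3 i1 hX) ?(@psd_sym _ X i3 i2 hX);
  move/le_trans; apply; rewrite le_eqVlt; apply/orP; left; apply/eqP; ring.

Lemma pair03 X a b : psd X -> 0 <= a^+2 * X i0 i0 + 2 * a * b * X i0 i3 + b^+2 * X i3 i3.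
Proof. move=> hX; pairtac (a:R) (0:R) (0:R) (b:R) X hX. Qed.
Lemma pair02 X a b : psd X -> 0 <= a^+2 * X i0 i0 + 2 * a * b * X i0 i2 + b^+2 * X i2 i2.
Proof. move=> hX; pairtac (a:R) (0:R) (b:R) (0:R) X hX. Qed.
Lemma pair12 X a b : psd X -> 0 <= a^+2 * X i1 i1 + 2 * a * b * X i1 i2 + b^+2 * X i2 i2.
Proof. move=> hX; pairtac (0:R) (a:R) (b:R) (0:R) X hX. Qed.
Lemma diag0 X : psd X -> 0 <= X i0 i0.
Proof. move=> hX; pairtac (1:R) (0:R) (0:R) (0:R) X hX. Qed.
Lemma diag1 X : psd X -> 0 <= X i1 i1.
Proof. move=> hX; pairtac (0:R) (1:R) (0:R) (0:R) X hX. Qed.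
Lemma diag2 X : psd X -> 0 <= X i2 i2.
Proof. move=> hX; pairtac (0:R) (0:R) (1:R) (0:R) X hX. Qed.
Lemma diag3 X : psd X -> 0 <= X i3 i3.
Proof. move=> hX; pairtac (0:R) (0:R) (0:R) (1:R) X hX. Qed.

Lemma blk (p o q u w v : R) : 0 < p -> o^+2 <= p * q -> 0 <= v ->
  0 <= p^+2 * u + 2 * p * o * w + o^+2 * v -> 0 <= p * u + 2 * o * w + q * v.
Proof.
move=> hp hpq hv H; rewrite -(pmulr_rge0 _ hp).
have -> : p * (p * u + 2 * o * w + q * v) = (p^+2 * u + 2 * p * o * w + o^+2 * v) + (p * q - o^+2) * v by ring.
by apply: addr_ge0 => //; apply: mulr_ge0 => //; rewrite subr_ge0.
Qed.

Lemma zero_lin (x y : R) : (forall l, 0 <= x + 2 * l * y) -> y = 0.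
Proof.
move=> H; apply/eqP; apply/negPn/negP => hy.
have := H (- (x + 1) / (2 * y)).
have -> : x + 2 * (- (x + 1) / (2 * y)) * y = -1.
  by field; rewrite ?mulf_neq0 // ?pnatr_eq0.
by rewrite lerNr oppr0 ler10.
Qed.

End S3.

Section S4.
Variable R : realType.
Implicit Types X : 'M[R]_4.

Definition V (eps eta : R) := vreg (exA R) (exb R) (exC R) eps eta.

Lemma feas_unpack X eta : P_feas (exA R) (fun i => exb R i + eta * frob (exA R i) 1%:M) X ->
  [/\ psd X, X i0 i0 + 2 * X i1 i2 = 1 + eta, X i1 i1 = eta &
      2 * X i0 i2 + 2 * X i0 i3 + X i2 i2 = eta].
Proof.
case=> hX hc; split => //.
- by have := hc j0; rewrite frobA0 // frobAI /exb /= mulr1.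
- by have := hc j1; rewrite frobA1 frobAI /exb /= mulr1 add0r.
- by have := hc j2; rewrite frobA2 // frobAI /exb /= mulr1 add0r.
Qed.

Lemma V_lb (eps eta d K : R) : 0 <= eps -> 0 <= eta -> 0 < d -> d <= 1 -> 0 < K ->
  K^+2 <= d * eps / 2 -> K <= d / 4 ->
  (((1 - d) * (1 + eta) + eta * (eps - 2 / K) - K * eta)%:E <= V eps eta)%E.
Proof.
move=> he heta hd hd1 hK hK2 hK4.
apply: le_ereal_inf_tmp => _ [X /feas_unpack [hX h0 h1 h2] <-].
rewrite lee_fin frobC.
have B14 : 0 <= (d/2) * X i0 i0 + 2 * K * X i0 i3 + eps * X i3 i3.
  apply: blk; [lra | lra | exact: diag3 | exact: pair03].
have B13 : 0 <= (d/2) * X i0 i0 + 2 * K * X i0 i2 + (2 * K^+2 / d) * X i2 i2.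
  apply: blk; [lra | | exact: diag2 | exact: pair02].
  rewrite le_eqVlt; apply/orP; left; apply/eqP; field; by rewrite gt_eqF.
have B23 : 0 <= (2 / K) * X i1 i1 + 2 * (-(1 - d)) * X i1 i2 + (K / 2) * X i2 i2.
  apply: blk; [by rewrite divr_gt0 | | exact: diag2 | exact: pair12].
  have -> : 2 / K * (K / 2) = 1 by field; rewrite gt_eqF.
  by rewrite sqrrN; nra.
have D0 := @diag0 _ X hX.
have D2 := @diag2 _ X hX.
have c2 : 0 <= eps + K / 2 - 2 * K^+2 / d.
  have : 2 * K^+2 / d <= K / 2.
    rewrite ler_pdivrMr //. nra.
  lra.
have E : X i0 i0 + eps * (X i0 i0 + X i1 i1 + X i2 i2 + X i3 i3) -
   ((1 - d) * (1 + eta) + eta * (eps - 2 / K) - K * eta) =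
   ((d/2) * X i0 i0 + 2 * K * X i0 i3 + eps * X i3 i3) +
   ((d/2) * X i0 i0 + 2 * K * X i0 i2 + (2 * K^+2 / d) * X i2 i2) +
   ((2 / K) * X i1 i1 + 2 * (-(1 - d)) * X i1 i2 + (K / 2) * X i2 i2) +
   eps * X i0 i0 + (eps + K / 2 - 2 * K^+2 / d) * X i2 i2.
  rewrite -h1.
  have -> : X i0 i0 = 1 + X i1 i1 - 2 * X i1 i2 by lra.
  have -> : X i2 i2 = X i1 i1 - 2 * X i0 i2 - 2 * X i0 i3 by lra.
  by field; rewrite !gt_eqF.
rewrite -subr_ge0 E.
apply: addr_ge0; last by apply: mulr_ge0.
apply: addr_ge0; last by apply: mulr_ge0.
by apply: addr_ge0 => //; apply: addr_ge0.
Qed.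

End S4.

Arguments V {R}.
Section S5.
Variable R : realType.
Implicit Types X : 'M[R]_4.

Definition M4 (f : nat -> nat -> R) : 'M[R]_4 := \matrix_(i, j) f (minn i j) (maxn i j).

Definition Q4 (f : nat -> nat -> R) (a b c d : R) : R :=
  f 0 0 * a^+2 + f 1 1 * b^+2 + f 2 2 * c^+2 + f 3 3 * d^+2 +
  2 * (f 0 1 * a * b + f 0 2 * a * c + f 0 3 * a * d + f 1 2 * b * c + f 1 3 * b * d + f 2 3 * c * d).

Lemma M4_psd f : (forall a b c d, 0 <= Q4 f a b c d) -> psd (M4 f).
Proof.
move=> H; split.
  by apply/matrixP => i j; rewrite !mxE minnC maxnC.
move=> x; rewrite quadE !sum4 !mxE /=.
have := H (x i0 0) (x i1 0) (x i2 0) (x i3 0); rewrite /Q4.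
move/le_trans; apply; rewrite le_eqVlt; apply/orP; left; apply/eqP; ring.
Qed.

Lemma feas_unpack_b (b : 'I_3 -> R) X : P_feas (exA R) b X ->
  [/\ psd X, X i0 i0 + 2 * X i1 i2 = b j0, X i1 i1 = b j1 &
      2 * X i0 i2 + 2 * X i0 i3 + X i2 i2 = b j2].
Proof.
case=> hX hc; split => //.
- by have := hc j0; rewrite frobA0.
- by have := hc j1; rewrite frobA1.
- by have := hc j2; rewrite frobA2.
Qed.

Lemma feas_pack (b : 'I_3 -> R) X : psd X -> X i0 i0 + 2 * X i1 i2 = b j0 ->
  X i1 i1 = b j1 -> 2 * X i0 i2 + 2 * X i0 i3 + X i2 i2 = b j2 -> P_feas (exA R) b X.
Proof.
move=> hX e0 e1 e2; split => // -[[|[|[|k]]] Hk].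
- have -> : Ordinal Hk = j0 by apply: val_inj.
  by rewrite frobA0.
- have -> : Ordinal Hk = j1 by apply: val_inj.
  by rewrite frobA1.
- have -> : Ordinal Hk = j2 by apply: val_inj.
  by rewrite frobA2.
- by [].
Qed.

Lemma frobC0 X : frob (exC R) X = X i0 i0.
Proof. rewrite frob4 !sum4 /exC !mxE /=; lra. Qed.

Lemma V_ub (eps eta : R) : 0 <= eta ->
  (V eps eta <= (1 + eta + eps * (1 + 3 * eta))%:E)%E.
Proof.
move=> heta.
pose f := fun i j : nat => if i == j then (match i with 0 => 1 + eta | 1 => eta | 2 => eta | _ => 0 end) else (0:R).
apply: ge_ereal_inf; exists (frob (exC R + eps%:M) (M4 f))%:E.
  exists (M4 f) => //.
  have hp : psd (M4 f).
    apply: M4_psd => a b c d; rewrite /Q4 /f /=.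
    have : 0 <= (1 + eta) * a ^+ 2 + eta * b ^+ 2 + eta * c ^+ 2 by nra.
    lra.
  apply: feas_pack => //; rewrite !mxE /= /f /= /exb /= frobAI; lra.
rewrite frobC !mxE /f /= lee_fin; lra.
Qed.

Lemma V_ge0 (eta : R) : (0%:E <= V 0 eta)%E.
Proof.
apply: le_ereal_inf_tmp => _ [X /feas_unpack_b [hX _ _ _] <-].
rewrite lee_fin frobC mul0r addr0; exact: (@diag0 _ X hX).
Qed.

Lemma V0_ub (t a : R) : 0 < t -> 0 < a -> (V 0 t <= a%:E)%E.
Proof.
move=> ht ha.
pose h := (1 + t - a) / 2. pose c := h^+2 / t. pose w := (t - c) / 2. pose dd := w^+2 / a.
pose f := fun i j : nat => match i, j with
  | 0, 0 => a | 1, 1 => t | 1, 2 => h | 2, 2 => c | 0, 3 => w | 3, 3 => dd | _, _ => (0:R) end.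
apply: ge_ereal_inf; exists (frob (exC R + 0%:M) (M4 f))%:E.
  exists (M4 f) => //.
  have hp : psd (M4 f).
    apply: M4_psd => x0 x1 x2 x3; rewrite /Q4 /f /=.
    have E1 : a * (a * x0^+2 + 2 * w * x0 * x3 + dd * x3^+2) = (a * x0 + w * x3)^+2.
      by rewrite /dd; field; rewrite gt_eqF.
    have E2 : t * (t * x1^+2 + 2 * h * x1 * x2 + c * x2^+2) = (t * x1 + h * x2)^+2.
      by rewrite /c; field; rewrite gt_eqF.
    have P1 : 0 <= a * x0^+2 + 2 * w * x0 * x3 + dd * x3^+2.
      by rewrite -(pmulr_rge0 _ ha) E1 sqr_ge0.
    have P2 : 0 <= t * x1^+2 + 2 * h * x1 * x2 + c * x2^+2.
      by rewrite -(pmulr_rge0 _ ht) E2 sqr_ge0.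
    lra.
  apply: feas_pack => //; rewrite !mxE /= /f /= /exb /= frobAI /w /h; lra.
rewrite frobC !mxE /f /= lee_fin; lra.
Qed.

End S5.

Arguments V {R}.
Arguments M4 {R}.
Arguments frobC0 {R}.
Section S6.
Variable R : realType.
Implicit Types X : 'M[R]_4.

Lemma vP_eq : vP (exA R) (exb R) (exC R) = 1%:E.
Proof.
apply/eqP; rewrite eq_le; apply/andP; split.
  pose f := fun i j : nat => match i, j with 0, 0 => (1:R) | _, _ => 0 end.
  apply: ge_ereal_inf; exists (frob (exC R) (M4 f))%:E.
    exists (M4 f) => //.
    have hp : psd (M4 f).
      by apply: M4_psd => a b c d; rewrite /Q4 /f /=; nra.
    apply: feas_pack => //; rewrite !mxE /= /f /= /exb /=; lra.
  by rewrite frobC0 !mxE /f /=.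
apply: le_ereal_inf_tmp => _ [X /feas_unpack_b [hX h0 h1 h2] <-].
rewrite /exb /= in h0 h1.
have z : X i1 i2 = 0.
  apply: (@zero_lin _ (X i2 i2)) => l.
  have := @pair12 _ X l 1 hX; rewrite h1; lra.
rewrite lee_fin frobC0; lra.
Qed.

Lemma sum3 (F : 'I_3 -> 'M[R]_4) : \sum_(i < 3) F i = F j0 + F j1 + F j2.
Proof.
rewrite !big_ord_recr big_ord0 /= add0r.
have -> : (widen_ord (leqnSn 2) (widen_ord (leqnSn 1) ord_max)) = j0 by apply: val_inj.
have -> : (widen_ord (leqnSn 2) ord_max) = j1 by apply: val_inj.
have -> : (@ord_max 2) = j2 by apply: val_inj.
by [].
Qed.

Lemma sum3r (F : 'I_3 -> R) : \sum_(i < 3) F i = F j0 + F j1 + F j2.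
Proof.
rewrite !big_ord_recr big_ord0 /= add0r.
have -> : (widen_ord (leqnSn 2) (widen_ord (leqnSn 1) ord_max)) = j0 by apply: val_inj.
have -> : (widen_ord (leqnSn 2) ord_max) = j1 by apply: val_inj.
have -> : (@ord_max 2) = j2 by apply: val_inj.
by [].
Qed.

Lemma vD_eq : vD (exA R) (exb R) (exC R) = 0%:E.
Proof.
apply/eqP; rewrite eq_le; apply/andP; split; last first.
  apply: le_ereal_sup_tmp; exists 0%:E => //.
  exists (fun _ => 0) => /=; last by rewrite big1 // => i _; rewrite mulr0.
  rewrite /D_feas.
  have -> : exC R - \sum_(i < 3) (0:R) *: exA R i = M4 (fun i j => match i, j with 0, 0 => (1:R) | _, _ => 0 end).
    rewrite big1 ?subr0; last by move=> i _; rewrite scale0r.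
    apply/matrixP => i j; rewrite !mxE.
    case: i j => [[|[|[|[|i]]]] Hi] [[|[|[|[|j]]]] Hj] //=.
  by apply: M4_psd => a b c d; rewrite /Q4 /=; nra.
apply: ge_ereal_sup => _ [y hy <-].
rewrite sum3r /exb /= lee_fin.
set Z := exC R - \sum_(i < 3) y i *: exA R i in hy.
have ZE : forall i j, Z i j = exC R i j - (y j0 * exA R j0 i j + y j1 * exA R j1 i j + y j2 * exA R j2 i j).
  by move=> i j; rewrite /Z sum3 !mxE.
have z3 : Z i0 i3 = 0.
  apply: (@zero_lin _ (Z i0 i0)) => l.
  have := @pair03 _ Z 1 l hy.
  have -> : Z i3 i3 = 0 by rewrite ZE /exC /exA /exA1 /exA2 /exA3 !mxE /=; lra.
  lra.
have y2 : y j2 = 0.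
  by move: z3; rewrite ZE /exC /exA /exA1 /exA2 /exA3 !mxE /=; lra.
have z12 : Z i1 i2 = 0.
  apply: (@zero_lin _ (Z i1 i1)) => l.
  have := @pair12 _ Z 1 l hy.
  have -> : Z i2 i2 = 0 by rewrite ZE /exC /exA /exA1 /exA2 /exA3 !mxE /= y2; lra.
  lra.
by move: z12; rewrite ZE /exC /exA /exA1 /exA2 /exA3 !mxE /=; lra.
Qed.

End S6.

Section S7.
Variable R : realType.

Lemma conv_lim (f : R -> \bar R) (l : R) :
  (forall e : R, 0 < e -> e <= 1 -> \forall t \near 0^'+,
     ((l - e)%:E <= f t)%E /\ (f t <= (l + e)%:E)%E) ->
  f @ 0^'+ --> l%:E.
Proof.
move=> H.
have H' : forall e : R, 0 < e -> \forall t \near 0^'+,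
     ((l - e)%:E <= f t)%E /\ (f t <= (l + e)%:E)%E.
  move=> e he; have hm : 0 < Num.min e 1 by rewrite lt_min he ltr01.
  have hm1 : Num.min e 1 <= 1 by rewrite ge_min lexx orbT.
  have hme : Num.min e 1 <= e by rewrite ge_min lexx.
  apply: filterS (H _ hm hm1) => t [h1 h2]; split.
    by apply: le_trans h1; rewrite lee_fin lerB.
  by apply: le_trans h2 _; rewrite lee_fin lerD.
apply/fine_cvgP; split.
  apply: filterS (H' 1 ltr01) => t [].
  by case: (f t).
apply/cvgrPdist_le => e he.
apply: filterS (H' e he) => t /=.
case: (f t) => [r| |] //= [h1 h2]; last 2 first.
- by rewrite leNgt ltry in h2.
- by rewrite leNgt ltNyr in h1.
rewrite lee_fin in h1; rewrite lee_fin in h2.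
rewrite ler_norml; apply/andP; split; lra.
Qed.

End S7.

Section S8.
Variable R : realType.

Lemma est (r c s e d K : R) : 0 < r -> 0 < c -> c <= 1 -> 0 <= s -> s <= 1 -> 0 < e -> e <= 1 ->
  d = e / 2 -> K = d * c * r / 2 -> r <= d^+2 * c / 8 ->
  [/\ K^+2 <= d * (r^+2 * c) / 2, K <= d / 4 &
   1 - e <= (1 - d) * (1 + r^+2 * s) + r^+2 * s * (r^+2 * c - 2 / K) - K * (r^+2 * s)].
Proof.
move=> hr hc hc1 hs hs1 he he1 hd hK hrb.
have hd0 : 0 < d by rewrite hd; lra.
have hd1 : d <= 1/2 by rewrite hd; lra.
have hdc : d * c <= 1/2 by nra.
have hdc0 : 0 < d * c by apply: mulr_gt0.
have hr1 : r <= 1/32.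
  have : d^+2 * c <= 1/4 by rewrite expr2; nra.
  lra.
have hK0 : 0 < K by rewrite hK; apply: divr_gt0 => //; apply: mulr_gt0.
split.
- rewrite hK.
  have -> : (d * c * r / 2)^+2 = (d * (r^+2 * c) / 2) * (d * c / 2) by ring.
  rewrite ler_piMr //; first by apply: divr_ge0 => //; apply: mulr_ge0 => //; nra.
  lra.
- rewrite hK; nra.
- have E : r^+2 * s * (2 / K) = 4 * r * s / (d * c).
    by rewrite hK; field; rewrite !gt_eqF.
  have h1 : 4 * r * s / (d * c) <= d / 2.
    rewrite ler_pdivrMr //.
    have : r * s <= r by nra.
    have : d^+2 * c = d * (d * c) by ring.
    nra.
  have h2 : K * (r^+2 * s) <= d / 2.
    rewrite hK.
    have : r^+2 * s <= 1 by nra.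
    have : 0 <= r^+2 * s by nra.
    have : d * c * r / 2 <= d / 2 by nra.
    nra.
  have hrs : 0 <= r^+2 * s by apply: mulr_ge0 => //; apply: sqr_ge0.
  have h3 : 0 <= (1 - d) * (r^+2 * s) by apply: mulr_ge0 => //; lra.
  have h4 : 0 <= r^+2 * s * (r^+2 * c) by apply: mulr_ge0 => //; apply: mulr_ge0 => //; [apply: sqr_ge0 | lra].
  have -> : (1 - d) * (1 + r^+2 * s) + r^+2 * s * (r^+2 * c - 2 / K) - K * (r^+2 * s) =
     (1 - d) + (1 - d) * (r^+2 * s) + r^+2 * s * (r^+2 * c) - r^+2 * s * (2 / K) - K * (r^+2 * s) by ring.
  rewrite E; lra.
Qed.

End S8.

Arguments V_ge0 {R}.
Arguments V0_ub {R}.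
Arguments V_lb {R}.
Arguments V_ub {R}.
Arguments est {R}.

Theorem theorem3 (R : realType) :
  vP (exA R) (exb R) (exC R) = 1%:E /\
  vD (exA R) (exb R) (exC R) = 0%:E /\
  (forall theta : R, 0 <= theta -> theta < pi / 2 ->
     (fun t : R => vreg (exA R) (exb R) (exC R) (t * cos theta) (t * sin theta))
       @ 0^'+ --> vP (exA R) (exb R) (exC R)) /\
  ((fun t : R => vreg (exA R) (exb R) (exC R) (t * cos (pi / 2)) (t * sin (pi / 2)))
       @ 0^'+ --> vD (exA R) (exb R) (exC R)).
Proof.
split; first exact: vP_eq.
split; first exact: vD_eq.
split; last first.
  rewrite vD_eq cos_pihalf sin_pihalf; apply: conv_lim => e he _.
  near=> t.
  have ht : 0 < t by near: t; exact: nbhs_right_gt.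
  rewrite mulr0 mulr1 sub0r add0r; split.
    by apply: le_trans (V_ge0 t); rewrite lee_fin oppr_le0 ltW.
  exact: (V0_ub t e ht he).
move=> theta h0 hpi; rewrite vP_eq.
have hpi0 : 0 < pi / 2 :> R by rewrite divr_gt0 // pi_gt0.
have hc : 0 < cos theta by apply: cos_gt0_pihalf; apply/andP; split => //; lra.
have hs : 0 <= sin theta.
  apply: sin_ge0_pi; apply/andP; split => //.
  have := @pi_gt0 R; lra.
have hc1 := cos_le1 theta; have hs1 := sin_le1 theta.
apply: conv_lim => e he he1.
set d := e / 2.
set rho := d^+2 * cos theta / 8.
have hrho : 0 < rho by rewrite /rho /d; apply: divr_gt0 => //; apply: mulr_gt0 => //; apply: exprn_gt0; lra.
near=> t.
have ht : 0 < t by near: t; exact: nbhs_right_gt.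
have htr : t < rho^+2 by near: t; apply: nbhs_right_lt; apply: exprn_gt0.
have hte : t < e / 5 by near: t; apply: nbhs_right_lt; lra.
set r := Num.sqrt t.
have hr : 0 < r by rewrite sqrtr_gt0.
have htr2 : t = r^+2 by rewrite sqr_sqrtr // ltW.
have hrr : r <= rho.
  have : r < Num.sqrt (rho^+2) by rewrite ltr_sqrt // exprn_gt0.
  by rewrite sqrtr_sqr gtr0_norm // => /ltW.
set K := d * cos theta * r / 2.
have [k1 k2 k3] := est r (cos theta) (sin theta) e d K hr hc hc1 hs hs1 he he1 (erefl d) (erefl K) hrr.
have hd0 : 0 < d by rewrite /d; lra.
have hK0 : 0 < K by rewrite /K; apply: divr_gt0 => //; apply: mulr_gt0 => //; apply: mulr_gt0.
have hts : 0 <= t * sin theta by apply: mulr_ge0 => //; lra.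
have htc : 0 <= t * cos theta by apply: mulr_ge0 => //; lra.
split.
  apply: (le_trans _ (V_lb (t * cos theta) (t * sin theta) d K htc hts hd0 _ hK0 _ k2)).
  - by rewrite lee_fin htr2.
  - rewrite /d; lra.
  - by rewrite htr2.
apply: (le_trans (V_ub (t * cos theta) (t * sin theta) hts)).
rewrite lee_fin.
have a1 : t * sin theta <= t by rewrite ler_piMr //; lra.
have a2 : t * cos theta <= t by rewrite ler_piMr //; lra.
have a3 : 1 + 3 * (t * sin theta) <= 4 by lra.
have a4 : t * cos theta * (1 + 3 * (t * sin theta)) <= t * 4.
  apply: ler_pM => //; lra.
lra.
Unshelve. all: by end_near.
Qed.
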